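(* Let $V$ be a nonempty set, $E\subset V\times V$, $W\subset V$, $W^c=V\setminus W$. Then $$\Delta_{W^c}\big(\Delta\cup(B_W\cup K_W^{-1})C_W\big)(E_W^{-1})^*(E_W)^*\,C_W\,(E_W^{-1})^*(E_W)^*\big(\Delta\cup C_W(B_W^-\cup K_W^{-1})\big)\Delta_{W^c} =\Delta_{W^c}(B_W\cup K_W^{-1})\,C_W\,(B_W^-\cup K_W^{-1})\Delta_{W^c}.$$
   Context: Relations on $V$: composition $RR'$: $x(RR')y$ iff there is $z$ with $xRz$ and $zR'y$; $R^{-1}$ is the converse; $R^0=\Delta$, $R^{n+1}=RR^n$, $R^+=\bigcup_{k\ge1}R^k$, $R^*=\bigcup_{k\ge0}R^k$. For $S\subset V$, $\Delta_S=\{(x,x):x\in S\}$, $\Delta=\Delta_V$. Definitions: $E_W=\Delta_{W^c}E$; $B_W=E(E_W)^*$; $B_W^-=(B_W)^{-1}=(E_W^{-1})^*E^{-1}$; $K_W=B_W^-\Delta_{W^c}B_W$; $C_W=(\Delta_WK_W\Delta_W)^+\cup\Delta_W$. *)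

(* Defs.v *)
From Stdlib Require Import Arith.

Definition rel (V : Type) := V -> V -> Prop.

Section Rels.
Context {V : Type}.

Definition rcomp (R R' : rel V) : rel V := fun x y => exists z, R x z /\ R' z y.
Definition rconv (R : rel V) : rel V := fun x y => R y x.
Definition runion (R R' : rel V) : rel V := fun x y => R x y \/ R' x y.
Definition diagS (S : V -> Prop) : rel V := fun x y => x = y /\ S x.
Definition diag : rel V := fun x y => x = y.
Definition compl (W : V -> Prop) : V -> Prop := fun x => ~ W x.
Fixpoint rpow (R : rel V) (n : nat) : rel V :=
  match n with
  | 0 => diag
  | S n' => rcomp R (rpow R n')
  end.
Definition rplus (R : rel V) : rel V := fun x y => exists k, 1 <= k /\ rpow R k x y.
Definition rstar (R : rel V) : rel V := fun x y => exists k, rpow R k x y.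
Definition req (R R' : rel V) : Prop := forall x y, R x y <-> R' x y.

Definition E_W (E : rel V) (W : V -> Prop) : rel V := rcomp (diagS (compl W)) E.
Definition B_W (E : rel V) (W : V -> Prop) : rel V := rcomp E (rstar (E_W E W)).
Definition Bm_W (E : rel V) (W : V -> Prop) : rel V := rconv (B_W E W).
Definition K_W (E : rel V) (W : V -> Prop) : rel V :=
  rcomp (Bm_W E W) (rcomp (diagS (compl W)) (B_W E W)).
Definition C_W (E : rel V) (W : V -> Prop) : rel V :=
  runion (rplus (rcomp (diagS W) (rcomp (K_W E W) (diagS W)))) (diagS W).

End Rels.

(* Main.v *)
Require Import Defs.
From Stdlib Require Import Arith Lia.

Lemma rpow_add {V} (R : rel V) m n x y z :
  rpow R m x y -> rpow R n y z -> rpow R (m+n) x z.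
Proof.
  revert x; induction m as [|m IH]; intros x H1 H2; simpl in *.
  - unfold diag in H1; subst; exact H2.
  - destruct H1 as [w [Hw Hr]]. exists w; split; [exact Hw | eapply IH; eauto].
Qed.

Lemma rpow_conv {V} (R : rel V) k x y : rpow (rconv R) k x y -> rpow R k y x.
Proof.
  revert x; induction k as [|k IH]; intros x H; simpl in *.
  - unfold diag in *; auto.
  - destruct H as [z [Hz Hr]]. apply IH in Hr.
    assert (H1 : rpow R (k+1) y x).
    { eapply rpow_add; [exact Hr|]. simpl. exists x; split; [exact Hz| reflexivity]. }
    rewrite Nat.add_1_r in H1. exact H1.
Qed.

Lemma star_conv {V} (R : rel V) x y : rstar (rconv R) x y -> rstar R y x.
Proof. intros [k H]; exists k; apply rpow_conv; auto. Qed.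

Lemma star_cases {V} (E : rel V) W u y : rstar (E_W E W) u y ->
  u = y \/ (compl W u /\ B_W E W u y).
Proof.
  intros [[|k] H]; simpl in H.
  - left; exact H.
  - right. destruct H as [z [[w [[Huw Hc] He]] Hr]]. subst w.
    split; auto. exists z; split; auto. exists k; auto.
Qed.

Lemma Cpow_in {V} (E : rel V) W k : forall x y,
  rpow (rcomp (diagS W) (rcomp (K_W E W) (diagS W))) (S k) x y -> W x /\ W y.
Proof.
  induction k as [|k IH]; intros x y H.
  - destruct H as [z [[a [[Hxa Hx] [b [_ [Hbz Hb]]]]] Hz]]. simpl in Hz; unfold diag in Hz; subst; split; assumption.
  - destruct H as [z [[a [[Hxa Hx] [b [_ [Hbz Hb]]]]] Hz]]. subst. apply IH in Hz. tauto.
Qed.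

Lemma C_in {V} (E : rel V) W x y : C_W E W x y -> W x /\ W y.
Proof.
  intros [[[|k] [Hk H]] | [<- Hx]]; [lia | eapply Cpow_in; eauto | auto].
Qed.

Lemma C_trans {V} (E : rel V) W x y z : C_W E W x y -> C_W E W y z -> C_W E W x z.
Proof.
  intros [[k1 [Hk1 H1]] | [<- Hx]] [[k2 [Hk2 H2]] | [<- Hy]].
  - left. exists (k1+k2); split; [lia|]. eapply rpow_add; eauto.
  - left; exists k1; auto.
  - left; exists k2; auto.
  - right; split; auto.
Qed.

Lemma C_refl {V} (E : rel V) (W : V -> Prop) x : W x -> C_W E W x x.
Proof. intros; right; split; auto. Qed.

Lemma G_C {V} (E : rel V) W x y :
  rcomp (diagS W) (rcomp (K_W E W) (diagS W)) x y -> C_W E W x y.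
Proof. intros H; left; exists 1; split; auto. exists y; split; auto. reflexivity. Qed.

Lemma lem_a {V} (E : rel V) W x w u : compl W x -> W w ->
  rstar (E_W E W) u x -> rstar (E_W E W) u w ->
  runion (B_W E W) (rconv (K_W E W)) x w.
Proof.
  intros Hx Hw H1 H2.
  destruct (star_cases E W u x H1) as [<- | [Hu Bux]].
  - destruct (star_cases E W u w H2) as [<- | [_ B]]; [contradiction | left; auto].
  - destruct (star_cases E W u w H2) as [<- | [_ B]]; [contradiction|].
    right. exists u; split; [exact B|]. exists u; split; [split; auto | exact Bux].
Qed.

Lemma lem_b {V} (E : rel V) W y w u : compl W y -> W w ->
  rstar (E_W E W) u w -> rstar (E_W E W) u y ->
  runion (Bm_W E W) (rconv (K_W E W)) w y.
Proof.
  intros Hy Hw H1 H2.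
  destruct (star_cases E W u w H1) as [<- | [Hu Buw]].
  - destruct (star_cases E W u y H2) as [<- | [Hu _]]; contradiction.
  - destruct (star_cases E W u y H2) as [<- | [_ B]]; [left; exact Buw|].
    right. exists u; split; [exact B|]. exists u; split; [split; auto | exact Buw].
Qed.

Lemma lem_c {V} (E : rel V) W w w' u : W w -> W w' ->
  rstar (E_W E W) u w -> rstar (E_W E W) u w' -> C_W E W w w'.
Proof.
  intros Hw Hw' H1 H2.
  destruct (star_cases E W u w H1) as [<- | [Hu Buw]].
  - destruct (star_cases E W u w' H2) as [<- | [Hu _]]; [apply C_refl; auto | contradiction].
  - destruct (star_cases E W u w' H2) as [<- | [_ B]]; [contradiction|].
    apply G_C. exists w; split; [split; auto|]. exists w'; split; [|split; auto].
    exists u; split; [exact Buw|]. exists u; split; [split; auto | exact B].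
Qed.

Theorem lemma4 (V : Type) (HV : inhabited V) (E : rel V) (W : V -> Prop) :
  let Dc := diagS (compl W) in
  let EWi := rstar (rconv (E_W E W)) in
  let EW := rstar (E_W E W) in
  let B := B_W E W in
  let Bm := Bm_W E W in
  let Ki := rconv (K_W E W) in
  let C := C_W E W in
  req
    (rcomp Dc
     (rcomp (runion diag (rcomp (runion B Ki) C))
     (rcomp EWi (rcomp EW (rcomp C (rcomp EWi (rcomp EW
     (rcomp (runion diag (rcomp C (runion Bm Ki))) Dc))))))))
    (rcomp Dc (rcomp (runion B Ki) (rcomp C (rcomp (runion Bm Ki) Dc)))).
Proof.
  cbv zeta. intros x y; split.
  - intros [x0 [[<- Hx] [a [H1 [b [HA1 [c [HF1 [d [HC [e [HA2 [f [HF2 [y0 [H2 [<- Hy]]]]]]]]]]]]]]]]].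
    apply star_conv in HA1. apply star_conv in HA2.
    destruct (C_in E W c d HC) as [Wc Wd].
    assert (L : exists p, runion (B_W E W) (rconv (K_W E W)) x p /\ C_W E W p c).
    { destruct H1 as [Hd | [p [Hp Cpa]]].
      - unfold diag in Hd; subst a. exists c; split; [|apply C_refl; auto].
        eapply lem_a; eauto.
      - exists p; split; auto. destruct (C_in E W p a Cpa) as [_ Wa].
        eapply C_trans; eauto. eapply lem_c; eauto. }
    assert (R : exists q, C_W E W d q /\ runion (Bm_W E W) (rconv (K_W E W)) q y0).
    { destruct H2 as [Hd | [q [Cfq Hq]]].
      - unfold diag in Hd; subst f. exists d; split; [apply C_refl; auto|].
        eapply lem_b; eauto.
      - exists q; split; auto. destruct (C_in E W f q Cfq) as [Wf _].
        eapply C_trans; [|exact Cfq]. eapply lem_c; eauto. }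
    destruct L as [p [Lp Cp]]. destruct R as [q [Cq Rq]].
    exists x; split; [split; auto|]. exists p; split; auto.
    exists q; split; [eapply C_trans; [eapply C_trans; eauto| eauto]|].
    exists y0; split; auto. split; auto.
  - intros [x0 [[<- Hx] [p [Hp [q [Cpq [y0 [Hq [<- Hy]]]]]]]]].
    destruct (C_in E W p q Cpq) as [Wp Wq].
    exists x; split; [split; auto|].
    exists p; split; [right; exists p; split; auto; apply C_refl; auto|].
    exists p; split; [exists 0; reflexivity|].
    exists p; split; [exists 0; reflexivity|].
    exists q; split; auto.
    exists q; split; [exists 0; reflexivity|].
    exists q; split; [exists 0; reflexivity|].
    exists y0; split; [right; exists q; split; auto; apply C_refl; auto|].
    split; auto.
Qed.
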